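(* Let $\nu$ be a positive Borel measure on $\mathbb{C}$, finite on compact sets. The following three statements are pairwise equivalent: (b1) the balayage $\nu^{\mathrm{bal}}$ of $\nu$ from $\mathbb{C}^{\mathrm{up}}$ exists as a positive measure, i.e. $\nu^{\mathrm{bal}}(B)<+\infty$ for every bounded Borel set $B\subset\mathbb{C}$; (b2) for some bounded Borel set $B\subset\mathbb{R}$ of positive Lebesgue measure, $\int_{\mathbb{C}^{\mathrm{up}}}\omega(z,B)\,d\nu(z)<+\infty$; (b3) $\nu$ satisfies the Blaschke condition near infinity in $\mathbb{C}^{\mathrm{up}}$: $\int_{\mathbb{C}^{\mathrm{up}}\setminus D(r_0)}\operatorname{Im}\frac{1}{\bar z}\,d\nu(z)<+\infty$ for some $r_0>0$.
   Context: $\mathbb{C}^{\mathrm{up}}=\{\operatorname{Im}z>0\}$, $\mathbb{C}_{\overline{\mathrm{lw}}}=\{\operatorname{Im}z\le 0\}$, $D(r)$ the open disc of radius $r$ centred at $0$. For $z\in\mathbb{C}^{\mathrm{up}}$ and Borel $B\subset\mathbb{C}$ the harmonic measure is $\omega(z,B)=\frac1\pi\int_{B\cap\mathbb{R}}\frac{\operatorname{Im}z}{(t-\operatorname{Re}z)^2+(\operatorname{Im}z)^2}\,dt$. The balayage from $\mathbb{C}^{\mathrm{up}}$ is $\nu^{\mathrm{bal}}(B):=\int_{\mathbb{C}^{\mathrm{up}}}\omega(z,B)\,d\nu(z)+\nu(B\cap\mathbb{C}_{\overline{\mathrm{lw}}})$. *)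

(* Defs.v *)
From HB Require Import structures.
From mathcomp Require Import all_boot all_order all_algebra.
From mathcomp Require Import all_classical all_reals all_analysis.
Set Implicit Arguments. Unset Strict Implicit. Unset Printing Implicit Defensive.
Import Order.TTheory GRing.Theory Num.Theory.
Import numFieldNormedType.Exports.
Local Open Scope classical_set_scope.
Local Open Scope ring_scope.

(* The complex plane C is modelled as R * R, z = (Re z, Im z), with the
   product sigma-algebra (= Borel sigma-algebra of R^2). *)

Definition Cup (R : realType) : set (R * R) := [set z | 0 < z.2].
Arguments Cup : clear implicits.
Definition Clw_closed (R : realType) : set (R * R) := [set z | z.2 <= 0].
Arguments Clw_closed : clear implicits.
Definition disc (R : realType) (r : R) : set (R * R) :=
  [set z | z.1 ^+ 2 + z.2 ^+ 2 < r ^+ 2].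

Definition bounded_C (R : realType) (B : set (R * R)) : Prop :=
  exists M : R, forall z, B z -> z.1 ^+ 2 + z.2 ^+ 2 <= M.
Definition bounded_R (R : realType) (B : set R) : Prop :=
  exists M : R, forall t, B t -> `|t| <= M.

Definition real_trace (R : realType) (B : set (R * R)) : set R :=
  [set t | B (t, 0)].
Definition R_to_C (R : realType) (B : set R) : set (R * R) :=
  [set (t, 0) | t in B].

Definition poisson_kernel (R : realType) (z : R * R) (t : R) : R :=
  z.2 / ((t - z.1) ^+ 2 + z.2 ^+ 2).

Definition harm_measure (R : realType) (z : R * R) (B : set (R * R)) : \bar R :=
  ((pi^-1)%:E * \int[@lebesgue_measure R]_(t in real_trace B)
      (poisson_kernel z t)%:E)%E.

Definition balayage (R : realType) (nu : {measure set (R * R) -> \bar R})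
  (B : set (R * R)) : \bar R :=
  (\int[nu]_(z in Cup R) harm_measure z B + nu (B `&` Clw_closed R))%E.

(* Im (1 / conj z) = Im z / |z|^2 *)
Definition im_inv_conj (R : realType) (z : R * R) : R :=
  z.2 / (z.1 ^+ 2 + z.2 ^+ 2).

(* Main.v *)
Require Import Defs.
From HB Require Import structures.
From mathcomp Require Import all_boot all_order all_algebra.
From mathcomp Require Import all_classical all_reals all_analysis.
From mathcomp Require Import ring lra.
From mathcomp Require Import measurable_realfun.
Import Order.TTheory GRing.Theory Num.Theory.
Import numFieldNormedType.Exports.
Local Open Scope classical_set_scope.
Local Open Scope ring_scope.

Section S1.
Context {R : realType}.
Lemma cont_poi (x y : R) : 0 < y -> continuous (poisson_kernel (x, y)).
Proof.
move=> y0 t; rewrite /poisson_kernel /=.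
apply: cvgM; first exact: cvg_cst.
apply: cvgV; first by rewrite gt_eqF // ltr_pwDr ?exprn_gt0 ?sqr_ge0.
apply: cvgD; last exact: cvg_cst.
rewrite expr2; apply: cvgM; apply: cvgB; (exact: cvg_id || exact: cvg_cst).
Qed.

Lemma aff_derive (x y t : R) : is_derive t 1 (fun t => (t - x) / y) y^-1.
Proof.
apply: is_derive_eq; rewrite scaler0 add0r subr0 /=; by rewrite /GRing.scale /= mulr1.
Qed.

Lemma poisson_itv (x y a b : R) : 0 < y -> a < b ->
 (\int[lebesgue_measure]_(t in `[a,b]) (poisson_kernel (x,y) t)%:E =
   (atan ((b-x)/y) - atan ((a-x)/y))%:E)%E.
Proof.
move=> y0 ab.
rewrite (@continuous_FTC2 R _ (fun t => atan ((t - x) / y))) //.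
- by apply: continuous_subspaceT; exact: cont_poi.
- have cF : continuous (fun t => atan ((t - x) / y)).
    move=> t; apply: continuous_comp; last exact: continuous_atan.
    apply: cvgM; last exact: cvg_cst.
    by apply: cvgB; (exact: cvg_id || exact: cvg_cst).
  split.
  + move=> t _; apply/derivable1_diffP.
    apply: (@differentiable_comp _ _ _ _ (fun t => (t - x) / y) atan).
      apply/derivable1_diffP; have := aff_derive x y t => H; exact: ex_derive.
    exact/derivable1_diffP/derivable_atan.
  + exact/cvg_at_right_filter/cF.
  + exact/cvg_at_left_filter/cF.
- move=> t _.
  rewrite (@derive1_comp _ (fun t => (t - x) / y) atan); last first.
      exact: derivable_atan.
    have := aff_derive x y t => H; exact: ex_derive.
  rewrite derive1_atan derive1E (@derive_val _ _ _ _ _ _ _ (aff_derive x y t)) /poisson_kernel /=.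
  have ? : y != 0 by rewrite gt_eqF.
  have ? : (t - x) ^+ 2 + y ^+ 2 != 0 by rewrite gt_eqF // ltr_pwDr ?exprn_gt0 ?sqr_ge0.
  by field; apply/andP.
Qed.
Lemma meas_inv : measurable_fun [set: R] (@GRing.inv R).
Proof.
have -> : [set: R] = ~` [set 0] `|` [set 0] by rewrite setUC setUCr.
apply/measurable_funU => //.
  by apply: measurableC.
split; last exact: measurable_fun_set1.
apply: measurable_realfun.open_continuous_measurable_fun.
  apply: closed_openC; apply: accessible_closed_set1.
  apply: hausdorff_accessible; exact: Rhausdorff.
move=> x; rewrite inE /= => x0. apply: inv_continuous. exact/eqP.
Qed.

Lemma meas_nrm : measurable_fun [set: R * R] (fun z : R * R => z.1 ^+ 2 + z.2 ^+ 2).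
Proof.
apply: measurable_funD; apply: measurable_funX; [exact: measurable_fst|exact: measurable_snd].
Qed.

Lemma meas_im : measurable_fun [set: R * R] (@im_inv_conj R).
Proof.
apply: measurable_funM; first exact: measurable_snd.
exact: measurableT_comp meas_inv meas_nrm.
Qed.

Lemma meas_Cup : measurable (Cup R).
Proof.
have -> : Cup R = snd @^-1` `]0, +oo[ by apply/seteqP; split => z /=; rewrite in_itv /= andbT.
by rewrite -[X in measurable X]setTI; apply: measurable_snd.
Qed.

Lemma meas_disc (r : R) : measurable (disc r).
Proof.
have -> : disc r = (fun z : R * R => z.1 ^+ 2 + z.2 ^+ 2) @^-1` `]-oo, r ^+ 2[.
  by apply/seteqP; split => z /=; rewrite in_itv /=.
by rewrite -[X in measurable X]setTI; apply: meas_nrm.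
Qed.

Local Open Scope ereal_scope.
Lemma le_int_nm d (T : measurableType d) (mu : {measure set T -> \bar R}) D (f g : T -> \bar R) :
 (forall x, D x -> 0 <= f x) -> (forall x, D x -> f x <= g x) ->
 \int[mu]_(x in D) f x <= \int[mu]_(x in D) g x.
Proof.
move=> f0 fg.
have g0 x : D x -> 0 <= g x by move=> Dx; exact: le_trans (f0 _ Dx) (fg _ Dx).
rewrite !ge0_integralE//.
apply: le_ereal_sup => _ [h hf <-]; exists h => //= x.
apply: le_trans (hf x) _; exact: lee_restrict.
Qed.

Lemma le_int_sub d (T : measurableType d) (mu : {measure set T -> \bar R}) D1 D2 (f : T -> \bar R) :
 D1 `<=` D2 -> (forall x, D2 x -> 0 <= f x) ->
 \int[mu]_(x in D1) f x <= \int[mu]_(x in D2) f x.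
Proof.
move=> D12 f0; rewrite (integral_mkcond D1) (integral_mkcond D2).
apply: le_int_nm => x _.
  by apply: erestrict_ge0 => y /D12; exact: f0.
rewrite /patch; case: ifPn => [/[1!inE] /D12 D2x|_]; first by rewrite mem_set.
by case: ifPn => // /[1!inE] /f0.
Qed.
End S1.
Section S2.
Context {R : realType}.
Local Open Scope ereal_scope.

Lemma poisson_ge0 (x y t : R) : (0 < y)%R -> (0 <= poisson_kernel (x, y) t)%R.
Proof.
move=> y0; rewrite /poisson_kernel /=; apply: divr_ge0; [exact: ltW|by rewrite addr_ge0 ?sqr_ge0].
Qed.

Lemma harm_ge0 (z : R * R) B : (0 < z.2)%R -> 0 <= harm_measure z B.
Proof.
case: z => x y /= y0; rewrite /harm_measure; apply: mule_ge0.
  by rewrite lee_fin invr_ge0 pi_ge0.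
by apply: integral_ge0 => t _; rewrite lee_fin poisson_ge0.
Qed.

Lemma harm_le1 (z : R * R) B (A : R) : (0 < z.2)%R ->
  (forall t, real_trace B t -> `|t| <= A)%R -> harm_measure z B <= 1.
Proof.
case: z => x y /= y0 hA.
set A' := (`|A| + 1)%R.
have A'0 : (- A' < A')%R by rewrite gtrN // /A' ltr_pwDr // normr_ge0.
have sub : real_trace B `<=` `[(- A')%R, A'].
  move=> t /hA tA; rewrite /= in_itv /= -ler_norml.
  by apply: le_trans tA _; rewrite /A' ler_wpDr // ler_norm.
have I1 := @le_int_sub R _ _ lebesgue_measure _ _ (fun t => (poisson_kernel (x, y) t)%:E) sub
  (fun t _ => ltac:(by rewrite lee_fin; exact: poisson_ge0)).
rewrite poisson_itv // in I1.
have hpi : (atan ((A' - x) / y) - atan ((- A' - x) / y) <= pi)%R.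
  have h1 := atan_ltpi2 ((A' - x) / y).
  have h2 := atan_gtNpi2 ((- A' - x) / y).
  lra.
rewrite /harm_measure.
have pi0 : (0 < pi :> R)%R by exact: pi_gt0.
apply: le_trans (_ : (pi^-1)%:E * pi%:E <= 1); last by rewrite -EFinM mulVf ?gt_eqF.
apply: lee_wpmul2l; first by rewrite lee_fin invr_ge0 ltW.
exact: le_trans I1 _.
Qed.

Lemma kern_far (x y t A : R) : (0 < y)%R -> (`|t| <= A)%R ->
  (4 * A ^+ 2 <= x ^+ 2 + y ^+ 2)%R ->
  (poisson_kernel (x, y) t <= 4 * (y / (x ^+ 2 + y ^+ 2)))%R.
Proof.
move=> y0 tA hS; rewrite /poisson_kernel /=.
have t2 : (t ^+ 2 <= A ^+ 2)%R.
  have e : (t ^+ 2 = `|t| ^+ 2)%R by rewrite real_normK ?num_real.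
  have := normr_ge0 t; rewrite e; nra.
have S0 : (0 < x ^+ 2 + y ^+ 2)%R by rewrite ltr_pwDr ?exprn_gt0 ?sqr_ge0.
have D0 : (0 < (t - x) ^+ 2 + y ^+ 2)%R by rewrite ltr_pwDr ?exprn_gt0 ?sqr_ge0.
rewrite ler_pdivrMr // (_ : (4 * (y / (x ^+ 2 + y ^+ 2)) * ((t - x) ^+ 2 + y ^+ 2) =
  4 * y * ((t - x) ^+ 2 + y ^+ 2) / (x ^+ 2 + y ^+ 2))%R); last by rewrite !mulrA mulrAC.
rewrite ler_pdivlMr //.
have h : (x ^+ 2 + y ^+ 2 <= 4 * ((t - x) ^+ 2 + y ^+ 2))%R.
  have := sqr_ge0 (x - 2 * t); nra.
nra.
Qed.

Lemma harm_far (z : R * R) B (A : R) : (0 < z.2)%R -> (0 < A)%R ->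
  (forall t, real_trace B t -> `|t| <= A)%R ->
  (4 * A ^+ 2 <= z.1 ^+ 2 + z.2 ^+ 2)%R ->
  harm_measure z B <= ((8 * A / pi) * im_inv_conj z)%:E.
Proof.
case: z => x y /= y0 A0 hA hS.
have sub : real_trace B `<=` `[(- A)%R, A].
  by move=> t /hA tA; rewrite /= in_itv /= -ler_norml.
have I1 := @le_int_sub R _ _ lebesgue_measure _ _ (fun t => (poisson_kernel (x, y) t)%:E) sub
  (fun t _ => ltac:(by rewrite lee_fin; exact: poisson_ge0)).
set c := (4 * (y / (x ^+ 2 + y ^+ 2)))%R.
have I2 : \int[lebesgue_measure]_(t in `[(- A)%R, A]) (poisson_kernel (x, y) t)%:E
    <= \int[lebesgue_measure]_(t in `[(- A)%R, A]) (cst c%:E) t.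
  apply: le_int_nm => t tin; first by rewrite lee_fin; exact: poisson_ge0.
  move: tin; rewrite /= in_itv /= => tA; rewrite lee_fin /c; apply: kern_far; [exact: y0|idtac|exact: hS]. rewrite ler_norml; exact: tA.
have E : lebesgue_measure (`[(- A)%R, A] : set R) = (A + A)%:E.
  apply: eq_trans (@lebesgue_measure_itv R `[(- A)%R, A]) _.
  rewrite /= lte_fin gtrN // -EFinD opprK. done.
rewrite integral_cst // in I2.
have I3 : \int[lebesgue_measure]_(t in `[(- A)%R, A]) (poisson_kernel (x, y) t)%:E <= (c * (A + A))%:E.
  by rewrite EFinM -E; exact: I2.
rewrite /harm_measure.
have pi0 : (0 < pi :> R)%R by exact: pi_gt0.
apply: le_trans (_ : (pi^-1)%:E * (c * (A + A))%:E <= _).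
  apply: lee_wpmul2l; first by rewrite lee_fin invr_ge0 ltW.
  exact: le_trans I1 I3.
rewrite -EFinM lee_fin /c /im_inv_conj /=.
have S0 : (x ^+ 2 + y ^+ 2 != 0)%R by rewrite gt_eqF // ltr_pwDr ?exprn_gt0 ?sqr_ge0.
rewrite le_eqVlt; apply/orP; left; apply/eqP. move: pi0; move: (pi : R) => p p0. field. by rewrite S0 /= gt_eqF.
Qed.

Lemma real_trace_R_to_C (B : set R) : real_trace (R_to_C B) = B.
Proof.
apply/seteqP; split => t /=.
  by case=> t' Bt' [<-].
by move=> Bt; exists t.
Qed.

Lemma kern_near (x y t M : R) : (0 < y)%R -> (`|t| <= M)%R ->
  (M ^+ 2 <= x ^+ 2 + y ^+ 2)%R ->
  (y / (x ^+ 2 + y ^+ 2) / 4 <= poisson_kernel (x, y) t)%R.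
Proof.
move=> y0 tA hS; rewrite /poisson_kernel /=.
have t2 : (t ^+ 2 <= M ^+ 2)%R.
  have e : (t ^+ 2 = `|t| ^+ 2)%R by rewrite real_normK ?num_real.
  have := normr_ge0 t; rewrite e; nra.
have S0 : (0 < x ^+ 2 + y ^+ 2)%R by rewrite ltr_pwDr ?exprn_gt0 ?sqr_ge0.
have D0 : (0 < (t - x) ^+ 2 + y ^+ 2)%R by rewrite ltr_pwDr ?exprn_gt0 ?sqr_ge0.
have h : ((t - x) ^+ 2 + y ^+ 2 <= 4 * (x ^+ 2 + y ^+ 2))%R.
  have := sqr_ge0 (x + t); nra.
rewrite -mulrA -invfM; apply: ler_wpM2l; first exact: ltW.
rewrite lef_pV2 ?posrE ?mulr_gt0 //; nra.
Qed.

Lemma harm_low (z : R * R) (B : set R) (M m : R) : (0 < z.2)%R -> measurable B ->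
  (forall t, B t -> `|t| <= M)%R -> (M ^+ 2 <= z.1 ^+ 2 + z.2 ^+ 2)%R ->
  lebesgue_measure B = m%:E ->
  ((m / (4 * pi)) * im_inv_conj z)%:E <= harm_measure z (R_to_C B).
Proof.
case: z => x y /= y0 mB hM hS mBm.
rewrite /harm_measure real_trace_R_to_C.
set c := (y / (x ^+ 2 + y ^+ 2) / 4)%R.
have I2 : \int[lebesgue_measure]_(t in B) (cst c%:E) t
    <= \int[lebesgue_measure]_(t in B) (poisson_kernel (x, y) t)%:E.
  apply: le_int_nm => t Bt; first by rewrite lee_fin /c; apply: divr_ge0 => //; apply: divr_ge0; [exact: ltW| by rewrite addr_ge0 ?sqr_ge0].
  rewrite lee_fin /c; apply: kern_near; [exact: y0|exact: hM|exact: hS].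
rewrite integral_cst // in I2.
have I3 : (c * m)%:E <= \int[lebesgue_measure]_(t in B) (poisson_kernel (x, y) t)%:E.
  by rewrite EFinM -mBm; exact: I2.
have pi0 : (0 < pi :> R)%R by exact: pi_gt0.
apply: le_trans (_ : (pi^-1)%:E * (c * m)%:E <= _); last first.
  by apply: lee_wpmul2l; [rewrite lee_fin invr_ge0 ltW | exact: I3].
rewrite -EFinM lee_fin /c /im_inv_conj /=.
have S0 : (x ^+ 2 + y ^+ 2 != 0)%R by rewrite gt_eqF // ltr_pwDr ?exprn_gt0 ?sqr_ge0.
rewrite le_eqVlt; apply/orP; left; apply/eqP. move: pi0; move: (pi : R) => p p0.
field. by rewrite S0 /= gt_eqF.
Qed.
End S2.
Section S3.
Context {R : realType}.
Local Open Scope ereal_scope.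

Lemma abs_le_sq (a M : R) : (a ^+ 2 <= M -> `|a| <= 1 + `|M|)%R.
Proof.
move=> h; have e : (a ^+ 2 = `|a| ^+ 2)%R by rewrite real_normK ?num_real.
have := normr_ge0 a; have := ler_norm M; rewrite e in h; nra.
Qed.

Lemma abs_lt_sq (a r : R) : (0 < r -> a ^+ 2 < r ^+ 2 -> `|a| <= r)%R.
Proof.
move=> r0 h; have e : (a ^+ 2 = `|a| ^+ 2)%R by rewrite real_normK ?num_real.
have := normr_ge0 a; rewrite e in h; nra.
Qed.

Definition square (a : R) : set (R * R) := `[(- a)%R, a] `*` `[(- a)%R, a].

Lemma square_compact a : compact (square a).
Proof. rewrite /square. apply: compact_setX; exact: segment_compact. Qed.

Lemma square_meas a : measurable (square a).
Proof. exact: measurableX. Qed.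

Lemma in_square (a : R) (z : R * R) : (`|z.1| <= a)%R -> (`|z.2| <= a)%R -> square a z.
Proof. by move=> h1 h2; split; rewrite /= in_itv /= -ler_norml. Qed.

Lemma meas_Clw : measurable (Clw_closed R).
Proof.
have -> : Clw_closed R = snd @^-1` `]-oo, 0%R] by apply/seteqP; split => z /=; rewrite in_itv /=.
by rewrite -[X in measurable X]setTI; apply: measurable_snd.
Qed.

Lemma im_ge0 (z : R * R) : Cup R z -> (0 <= im_inv_conj z)%R.
Proof.
rewrite /Cup /im_inv_conj /= => h; apply: divr_ge0; first exact: ltW.
by rewrite addr_ge0 ?sqr_ge0.
Qed.


Lemma b1_b2 (nu : {measure set (R * R) -> \bar R}) :
  (forall B : set (R * R), measurable B -> bounded_C B -> balayage nu B < +oo) ->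
  exists B : set R, [/\ measurable B, bounded_R B,
              (0 < @lebesgue_measure R B)%E &
              (\int[nu]_(z in Cup R) harm_measure z (R_to_C B) < +oo)%E].
Proof.
move=> h1; exists (`[0%R, 1%R]%classic : set R); split.
- exact: measurable_itv.
- by exists 1%R => t; rewrite /= in_itv /= => /andP[t0 t1]; rewrite ger0_norm.
- rewrite lebesgue_measure_itv /= lte_fin ltr01 -EFinB subr0 lte_fin; exact: ltr01.
- have eqB : R_to_C (`[0%R, 1%R]%classic : set R) = (`[0%R, 1%R]%classic : set R) `*` [set 0%R].
    apply/seteqP; split => z /=.
      by case=> t tB <-.
    by case: z => a b /= [aB ->]; exists a.
  have mB : measurable (R_to_C (`[0%R, 1%R]%classic : set R)) by rewrite eqB; exact: measurableX.
  have bB : bounded_C (R_to_C (`[0%R, 1%R]%classic : set R)).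
    exists 1%R => z [t]; rewrite /= in_itv /= => /andP[t0 t1] <- /=.
    rewrite expr0n /= addr0; nra.
  apply: le_lt_trans (h1 _ mB bB); rewrite /balayage; apply: leeDl.
  exact: measure_ge0.
Qed.

Lemma meas_imE (D : set (R * R)) : measurable_fun D (fun z => (im_inv_conj z)%:E).
Proof. by apply/measurable_EFinP; apply: measurable_funTS; exact: meas_im. Qed.

Lemma b2_b3 (nu : {measure set (R * R) -> \bar R}) :
  (exists B : set R, [/\ measurable B, bounded_R B,
              (0 < @lebesgue_measure R B)%E &
              (\int[nu]_(z in Cup R) harm_measure z (R_to_C B) < +oo)%E]) ->
  exists r0 : R, (0 < r0)%R /\
    (\int[nu]_(z in Cup R `\` disc r0) (im_inv_conj z)%:E < +oo)%E.
Proof.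
case=> B [mB [M hM] Bpos Bfin].
set r0 := (`|M| + 1)%R.
have r00 : (0 < r0)%R by rewrite /r0 ltr_pwDr // normr_ge0.
have hr0 : forall t, B t -> (`|t| <= r0)%R.
  by move=> t /hM tM; apply: le_trans tM _; rewrite /r0 ler_wpDr // ler_norm.
have Bsub : B `<=` `[(- r0)%R, r0] by move=> t /hr0; rewrite /= in_itv /= -ler_norml.
have Lm : lebesgue_measure (`[(- r0)%R, r0]%classic : set R) < +oo.
  have -> : lebesgue_measure (`[(- r0)%R, r0]%classic : set R) = (r0 + r0)%:E.
    apply: eq_trans (@lebesgue_measure_itv R `[(- r0)%R, r0]) _.
    by rewrite /= lte_fin gtrN // -EFinD opprK.
  exact: ltry.
have Bfin' : lebesgue_measure B < +oo.
  apply: le_lt_trans Lm; apply: le_measure => //; rewrite inE //; exact: measurable_itv.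
have : (0 <= lebesgue_measure B) by exact: measure_ge0.
case E : (lebesgue_measure B) Bpos Bfin' => [m| |] //.
rewrite !lte_fin => m0 _ _.
exists r0; split => //.
set k := (m / (4 * pi))%R.
have k0 : (0 < k)%R by rewrite /k divr_gt0 // mulr_gt0 // pi_gt0.
have mD : measurable (Cup R `\` disc r0) by apply: measurableD; [exact: meas_Cup|exact: meas_disc].
have L : \int[nu]_(z in Cup R `\` disc r0) (k%:E * (im_inv_conj z)%:E)
    <= \int[nu]_(z in Cup R) harm_measure z (R_to_C B).
  apply: le_trans (_ : _ <= \int[nu]_(z in Cup R `\` disc r0) harm_measure z (R_to_C B)) _.
    apply: le_int_nm => z [zC zD].
      by apply: mule_ge0; rewrite lee_fin ?(ltW k0) ?im_ge0.
    rewrite -EFinM; apply: (@harm_low R z B r0 m) => //.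
    by move/negP: zD; rewrite -leNgt.
  apply: le_int_sub; first exact: subDsetl.
  by move=> z zC; apply: harm_ge0.
rewrite ge0_integralZl_EFin // in L; last 3 first.
- by move=> z [zC _]; rewrite lee_fin im_ge0.
- exact: meas_imE.
- exact: ltW.
have I0 : 0 <= \int[nu]_(z in Cup R `\` disc r0) (im_inv_conj z)%:E.
  by apply: integral_ge0 => z [zC _]; rewrite lee_fin im_ge0.
move: L I0; case: (\int[nu]_(z in Cup R `\` disc r0) (im_inv_conj z)%:E) => [r| |] //.
  by move=> _ _; exact: ltry.
rewrite mulry gtr0_sg // mul1e => L _; have := le_lt_trans L Bfin; by rewrite ltxx.
Qed.

Lemma b3_b1 (nu : {measure set (R * R) -> \bar R})
  (hfin : forall K : set (R * R), compact K -> (nu K < +oo)%E) :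
  (exists r0 : R, (0 < r0)%R /\
    (\int[nu]_(z in Cup R `\` disc r0) (im_inv_conj z)%:E < +oo)%E) ->
  (forall B : set (R * R), measurable B -> bounded_C B -> balayage nu B < +oo).
Proof.
case=> r0 [r00 I3] B mB [M hM].
set A := (1 + `|M|)%R.
have A0 : (0 < A)%R by rewrite /A ltr_pwDl // normr_ge0.
have hA : forall t, real_trace B t -> (`|t| <= A)%R.
  move=> t /hM; rewrite /= expr0n /= addr0 => h; exact: abs_le_sq.
have nuK a : nu (square a) < +oo by apply: hfin; exact: square_compact.
rewrite /balayage; apply: lte_add_pinfty; last first.
  apply: le_lt_trans (nuK A); apply: le_measure; rewrite ?inE.
  - by apply: measurableI => //; exact: meas_Clw.
  - exact: square_meas.
  move=> z [Bz _]; have := hM z Bz => h.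
  apply: in_square; apply: abs_le_sq.
    by have := sqr_ge0 z.2; lra.
  by have := sqr_ge0 z.1; lra.
set R1 := Num.max r0 (2 * A)%R.
have R1r0 : (r0 <= R1)%R by rewrite /R1 le_max lexx.
have R1A : (2 * A <= R1)%R by rewrite /R1 le_max lexx orbT.
have R10 : (0 < R1)%R by exact: lt_le_trans r00 R1r0.
set C := (8 * A / pi)%R.
have C0 : (0 <= C)%R by rewrite /C divr_ge0 ?mulr_ge0 ?ltW ?pi_gt0.
pose g := fun z => (\1_(disc R1) z)%:E + ((fun z => (C * im_inv_conj z)%:E) \_ (~` disc r0)) z.
have mC := meas_Cup (R:=R).
have mdisc (r : R) : measurable (disc r) := meas_disc r.
have L1 : \int[nu]_(z in Cup R) harm_measure z B <= \int[nu]_(z in Cup R) g z.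
  apply: le_int_nm => z zC; first exact: harm_ge0.
  rewrite /g; have [zD|zD] := pselect (disc R1 z).
    rewrite indicE mem_set //; apply: le_trans (@harm_le1 R z B A zC hA) _.
    apply: leeDl; rewrite patchE; case: ifP => _; last exact: lexx.
    by rewrite lee_fin mulr_ge0 ?im_ge0.
  rewrite indicE memNset // add0e patchE ifT; last first.
    rewrite inE /= /disc /=; move/negP: zD; rewrite -leNgt => zD.
    apply/negP; rewrite -leNgt; apply: le_trans zD; nra.
  apply: harm_far => //.
  move/negP: zD; rewrite -leNgt; apply: le_trans.
  have : (0 <= 2 * A)%R by rewrite mulr_ge0 ?ltW.
  nra.
apply: le_lt_trans L1 _.
rewrite /g ge0_integralD; last 5 first.
- exact: mC.
- by move=> z _; rewrite lee_fin indicE; case: (_ \in _) => /=; rewrite ?ler01 ?lexx.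
- apply/measurable_EFinP; apply: measurable_indic; exact: mdisc.
- by move=> z zC; rewrite patchE; case: ifP => _ //; rewrite lee_fin mulr_ge0 ?im_ge0.
- apply: (proj1 (measurable_restrict _ (measurableC (mdisc r0)) mC)).
  apply: measurableT_comp => //; apply: measurable_funM; [exact: measurable_cst | exact: measurable_funTS meas_im].
apply: lte_add_pinfty.
  rewrite integral_indic //; apply: le_lt_trans (nuK R1).
  apply: le_measure; rewrite ?inE.
  - exact: measurableI.
  - exact: square_meas.
  move=> z [zD _]; apply: in_square; apply: abs_lt_sq => //.
    by have := sqr_ge0 z.2; rewrite /disc /= in zD; lra.
  by have := sqr_ge0 z.1; rewrite /disc /= in zD; lra.
rewrite -integral_mkcondr -setDE.
have mD : measurable (Cup R `\` disc r0) by apply: measurableD.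
under eq_integral do rewrite EFinM.
rewrite ge0_integralZl_EFin //; last 2 first.
- by move=> z [zC _]; rewrite lee_fin im_ge0.
- exact: meas_imE.
have I0 : 0 <= \int[nu]_(z in Cup R `\` disc r0) (im_inv_conj z)%:E.
  by apply: integral_ge0 => z [zC _]; rewrite lee_fin im_ge0.
move: I3 I0; case: (\int[nu]_(z in Cup R `\` disc r0) (im_inv_conj z)%:E) => [r| |] //.
by move=> _ _; rewrite -EFinM ltry.
Qed.
End S3.

Theorem corollary1 (R : realType) (nu : {measure set (R * R) -> \bar R})
  (hfin : forall K : set (R * R), compact K -> (nu K < +oo)%E) :
  let b1 := forall B : set (R * R), measurable B -> bounded_C B ->
              (balayage nu B < +oo)%E in
  let b2 := exists B : set R, [/\ measurable B, bounded_R B,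
              (0 < @lebesgue_measure R B)%E &
              (\int[nu]_(z in Cup R) harm_measure z (R_to_C B) < +oo)%E] in
  let b3 := exists r0 : R, 0 < r0 /\
              (\int[nu]_(z in Cup R `\` disc r0) (im_inv_conj z)%:E < +oo)%E in
  (b1 <-> b2) /\ (b2 <-> b3) /\ (b1 <-> b3).
Proof.
move=> b1 b2 b3.
have h12 : b1 -> b2 := @b1_b2 R nu.
have h23 : b2 -> b3 := @b2_b3 R nu.
have h31 : b3 -> b1 := @b3_b1 R nu hfin.
split; [split|split; split]; by tauto.
Qed.
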